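(* Let $\mathcal{L}=\mathfrak{sl}_n\dot+\mathcal{I}$ be as in the context and let $\Delta:\mathcal{L}\to\mathcal{L}$ be a linear map such that $\Delta_{\mathfrak{sl}_n}(x)=-x$ for all $x\in\mathfrak{sl}_n$. Then $\Delta$ is not a local automorphism of $\mathcal{L}$.
   Context: $\mathcal{L}=\mathfrak{sl}_n\oplus\mathcal{I}$ is a simple complex Leibniz algebra: $\mathfrak{sl}_n$ is the Lie algebra of trace-zero complex $n\times n$ matrices ($n\ge2$), $\mathcal{I}$ is a nonzero irreducible finite-dimensional right $\mathfrak{sl}_n$-module with nontrivial action $v\mapsto[v,g]$, and the bracket is $[(g_1,v_1),(g_2,v_2)]=([g_1,g_2],[v_1,g_2])$. An automorphism of $\mathcal{L}$ is an invertible linear map preserving the bracket; a linear map $\Delta$ is a local automorphism if for each $x\in\mathcal{L}$ there is an automorphism $\Phi_x$ with $\Phi_x(x)=\Delta(x)$. For a linear map $\Delta$ of $\mathcal{L}$, $\Delta_{\mathfrak{sl}_n}=p\circ\Delta|_{\mathfrak{sl}_n}$, where $p$ is the projection onto $\mathfrak{sl}_n$ along $\mathcal{I}$. *)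

(* Defs.v *)
From HB Require Import structures.
From mathcomp Require Import all_boot all_order all_algebra.
Set Implicit Arguments. Unset Strict Implicit. Unset Printing Implicit Defensive.
Import GRing.Theory.
Local Open Scope ring_scope.

(* Elements of L = sl_n (+) I are represented as pairs (g, v) with
   g : 'M[F]_n of trace zero and v : 'rV[F]_m (I ~ F^m, acting on the right
   via v |-> v *m rho g, i.e. [v, g] := v *m rho g). *)

Definition sl (F : fieldType) (n : nat) (g : 'M[F]_n) : Prop := \tr g = 0.

Definition inL (F : fieldType) (n m : nat) (x : 'M[F]_n * 'rV[F]_m) : Prop :=
  sl x.1.

Definition right_sl_module (F : fieldType) (n m : nat)
    (rho : 'M[F]_n -> 'M[F]_m) : Prop :=
  (forall (a : F) g h, sl g -> sl h -> rho (a *: g + h) = a *: rho g + rho h) /\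
  (forall g1 g2, sl g1 -> sl g2 ->
     rho (g1 *m g2 - g2 *m g1) = rho g1 *m rho g2 - rho g2 *m rho g1).

Definition irreducible_module (F : fieldType) (n m : nat)
    (rho : 'M[F]_n -> 'M[F]_m) : Prop :=
  (0 < m)%N /\
  forall U : 'M[F]_m, (forall g, sl g -> (U *m rho g <= U)%MS) ->
    U = 0 \/ row_full U.

Definition nontrivial_action (F : fieldType) (n m : nat)
    (rho : 'M[F]_n -> 'M[F]_m) : Prop :=
  exists g, sl g /\ rho g <> 0.

(* Leibniz bracket [(g1,v1),(g2,v2)] = ([g1,g2], [v1,g2]). *)
Definition lbracket (F : fieldType) (n m : nat) (rho : 'M[F]_n -> 'M[F]_m)
    (x y : 'M[F]_n * 'rV[F]_m) : 'M[F]_n * 'rV[F]_m :=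
  (x.1 *m y.1 - y.1 *m x.1, x.2 *m rho y.1).

Definition L_scale (F : fieldType) (n m : nat) (a : F)
    (x : 'M[F]_n * 'rV[F]_m) : 'M[F]_n * 'rV[F]_m := (a *: x.1, a *: x.2).
Definition L_add (F : fieldType) (n m : nat)
    (x y : 'M[F]_n * 'rV[F]_m) : 'M[F]_n * 'rV[F]_m := (x.1 + y.1, x.2 + y.2).

Definition L_linear (F : fieldType) (n m : nat)
    (f : 'M[F]_n * 'rV[F]_m -> 'M[F]_n * 'rV[F]_m) : Prop :=
  (forall x, inL x -> inL (f x)) /\
  (forall (a : F) x y, inL x -> inL y ->
     f (L_add (L_scale a x) y) = L_add (L_scale a (f x)) (f y)).

Definition L_automorphism (F : fieldType) (n m : nat) (rho : 'M[F]_n -> 'M[F]_m)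
    (f : 'M[F]_n * 'rV[F]_m -> 'M[F]_n * 'rV[F]_m) : Prop :=
  [/\ L_linear f,
      (forall x y, inL x -> inL y -> f x = f y -> x = y),
      (forall y, inL y -> exists2 x, inL x & f x = y) &
      (forall x y, inL x -> inL y -> f (lbracket rho x y) = lbracket rho (f x) (f y))].

Definition local_automorphism (F : fieldType) (n m : nat) (rho : 'M[F]_n -> 'M[F]_m)
    (D : 'M[F]_n * 'rV[F]_m -> 'M[F]_n * 'rV[F]_m) : Prop :=
  L_linear D /\
  forall x, inL x -> exists Phi, L_automorphism rho Phi /\ Phi x = D x.

(* Main.v *)
Require Import Defs.
From HB Require Import structures.
From mathcomp Require Import all_boot all_order all_algebra.
From mathcomp Require Import ring.
Import GRing.Theory.
Local Open Scope ring_scope.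
Lemma KL {F : fieldType} {m p : nat} {M : 'M[F]_m} {B : 'M[F]_(m,p)} :
 (forall v : 'rV_m, v *m M = 0 -> v = 0) ->
 (forall v : 'rV_m, v *m B = 0 -> v *m M *m B = 0) ->
 forall v : 'rV_m, v *m M *m B = 0 -> v *m B = 0.
Proof.
move=> Minj Pres v hv.
have fM := inj_row_free Minj.
set K := kermx B.
have sKM : (K *m M <= K)%MS.
  apply/sub_kermxP; apply/row_matrixP => i.
  rewrite row_mul (row_mul i K M) row0; apply: Pres.
  by apply/sub_kermxP; exact: row_sub.
have rK : \rank (K *m M) = \rank K by rewrite mxrankMfree.
have sK : (K <= K *m M)%MS.
  by rewrite -(mxrank_leqif_sup sKM) rK.
have : (v *m M <= K *m M)%MS.
  by apply: submx_trans sK; apply/sub_kermxP.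
case/submxP => x hx.
have e : (v - x *m K) *m M = 0 by rewrite mulmxBl hx mulmxA subrr.
have := Minj _ e; move/eqP; rewrite subr_eq0 => /eqP ->.
by rewrite -mulmxA; move/sub_kermxP: (submx_refl K) => ->; rewrite mulmx0.
Qed.
Lemma eigsub {F : closedFieldType} {m : nat} {A H : 'M[F]_m} :
  A != 0 -> (A *m H <= A)%MS ->
  exists w : 'rV_m, exists nu : F, [/\ w != 0, (w <= A)%MS & w *m H = nu *: w].
Proof.
move=> A0 sAH.
set V := row_base A.
have fV : row_free V := row_base_free A.
have sVH : (V *m H <= V)%MS.
  by have := stablemx_row_base A H; move=> ->.
set C := V *m H *m pinvmx V.
have r0 : (0 < \rank A)%N by rewrite lt0n mxrank_eq0.
have [nu hnu] : exists nu, root (char_poly C) nu.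
  by apply/closed_rootP; rewrite size_char_poly eqSS -lt0n.
move: hnu; rewrite -eigenvalue_root_char => /eigenvalueP [u hu u0].
exists (u *m V), nu; split.
- by apply: contra u0 => /eqP h; apply/eqP; apply: (row_free_inj fV); rewrite h mul0mx.
- by rewrite -(eq_row_base A); exact: submxMl.
- by rewrite -mulmxA -(mulmxKpV sVH) mulmxA -/C hu -scalemxAl.
Qed.

Lemma natr_inj0 {F : fieldType} (hF : [pchar F] =i pred0) (i j : nat) :
  i%:R = j%:R :> F -> i = j.
Proof.
have h0 := (pcharf0P F).1 hF.
wlog le : i j / (i <= j)%N.
  move=> W; case: (leqP i j) => h; first exact: W.
  by move=> e; apply/esym/W; [exact: ltnW | rewrite e].
move=> e; have := subnK le; move=> hj.
have : ((j - i)%N%:R == 0 :> F).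
  by apply/eqP; apply: (addIr (i%:R)); rewrite -natrD hj add0r.
rewrite h0 subn_eq0 => h; apply/eqP; by rewrite eqn_leq le h.
Qed.

Lemma expSm {F : fieldType} {m : nat} (A : 'M[F]_m) k : A ^+ k.+1 = A ^+ k *m A.
Proof. by rewrite exprSr mulmxE. Qed.

Lemma chain_eig {F : fieldType} {m : nat} {H Z : 'M[F]_m} {s mu : F} {v : 'rV_m} :
  Z *m H = H *m Z + s *: Z -> v *m H = mu *: v ->
  forall k : nat, v *m Z ^+ k *m H = (mu + k%:R * s) *: (v *m Z ^+ k).
Proof.
move=> hZ hv; elim=> [|k IH]; first by rewrite expr0 mulmx1 hv mul0r addr0.
rewrite expSm mulmxA -mulmxA hZ mulmxDr mulmxA IH -scalemxAl -scalemxAr.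
rewrite -mulmxA -scalerDl; congr (_ *: _); rewrite mulrSr; ring.
Qed.

Lemma chain_end {F : fieldType} (hF : [pchar F] =i pred0) {m : nat} {H Z : 'M[F]_m} {s mu : F} {v : 'rV_m} :
  s != 0 -> Z *m H = H *m Z + s *: Z -> v *m H = mu *: v -> v != 0 ->
  exists j : nat, v *m Z ^+ j != 0 /\ v *m Z ^+ j.+1 = 0.
Proof.
move=> s0 hZ hv v0.
have hE := chain_eig hZ hv.
have [N hN] : exists N, v *m Z ^+ N == 0.
  case: (boolP [exists k : 'I_m.+1, v *m Z ^+ k == 0]).
    by case/existsP=> k hk; exists k.
  rewrite negb_exists => /forallP hall; exfalso.
  have cp0 : char_poly H != 0.
    by rewrite -size_poly_eq0 size_char_poly.
  have := @max_poly_roots _ (char_poly H) [seq mu + (k : nat)%:R * s | k <- iota 0 m.+1] cp0.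
  rewrite size_map size_iota size_char_poly ltnn => Hf; suff: false by []; apply: Hf.
  - apply/allP => x /mapP [k]; rewrite mem_iota add0n => hk ->.
    rewrite -eigenvalue_root_char; apply/eigenvalueP.
    exists (v *m Z ^+ k); first exact: hE.
    exact: (hall (Ordinal hk)).
  - rewrite map_inj_in_uniq ?iota_uniq // => a b _ _ /addrI /(mulIf s0).
    exact: natr_inj0.
have exN : exists N, (fun N => v *m Z ^+ N == 0) N by exists N.
case: (ex_minnP exN) => N0 hN0 hmin.
case: N0 hN0 hmin => [|j] hj hmin.
  by move: hj; rewrite expr0 mulmx1 (negbTE v0).
exists j; split; last exact/eqP.
apply/negP => hj'; have := hmin _ hj'; by rewrite ltnn.
Qed.

Lemma rel_swap {V : zmodType} {a b c : V} : a - b = c -> b = a - c.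
Proof. by move=> <-; rewrite opprB addrC subrK. Qed.

Lemma lowest {F : fieldType} (hF : [pchar F] =i pred0) {m : nat} {X Y H : 'M[F]_m}
  (rHY : H *m Y - Y *m H = - (2%:R *: Y)) (rXY : X *m Y - Y *m X = H)
  {u : 'rV_m} {nu : F} :
  u != 0 -> u *m X = 0 -> u *m H = nu *: u -> exists k : nat, nu = - k%:R.
Proof.
move=> u0 uX uH.
have hZ : Y *m H = H *m Y + 2%:R *: Y by rewrite (rel_swap rHY) opprK.
have hYX : Y *m X = X *m Y - H by rewrite (rel_swap rXY).
have hE := chain_eig hZ uH.
have c : forall k : nat, u *m Y ^+ k.+1 *m X = - ((k.+1)%:R * (nu + k%:R)) *: (u *m Y ^+ k).
  elim=> [|k IH].
    rewrite expr1 expr0 mulmx1 -mulmxA hYX mulmxBr mulmxA uX mul0mx sub0r uH.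
    by rewrite addr0 mul1r scaleNr.
  rewrite expSm mulmxA -mulmxA hYX mulmxBr mulmxA IH -scalemxAl -(mulmxA u) -expSm hE.
  rewrite -scalerBl; congr (_ *: _); rewrite !mulrSr; ring.
have two0 : (2%:R : F) != 0.
  by apply/negP => /eqP h; have := @natr_inj0 _ hF 2 0 h.
have [j [hj1 hj2]] := chain_end hF two0 hZ uH u0.
exists j.
have := c j; rewrite hj2 mul0mx => /esym/eqP; rewrite scaler_eq0 (negbTE hj1) orbF oppr_eq0.
rewrite mulf_eq0 => /orP [/eqP h|].
  by have := @natr_inj0 _ hF j.+1 0 h.
by rewrite addr_eq0 => /eqP.
Qed.

Lemma main_abs {F : fieldType} (hF : [pchar F] =i pred0) {m : nat} {X Y H M : 'M[F]_m}
  (rHX : H *m X - X *m H = 2%:R *: X)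
  (rHY : H *m Y - Y *m H = - (2%:R *: Y)) (rXY : X *m Y - Y *m X = H)
  (Minj : forall v : 'rV_m, v *m M = 0 -> v = 0)
  (PX : forall v : 'rV_m, v *m X = 0 -> v *m M *m X = 0)
  (PH1 : forall v : 'rV_m, v *m H = 0 -> v *m M *m H = 0)
  (PH2 : forall (v : 'rV_m) (c : F), v *m (H *m H + c *: H) = 0 -> v *m M *m (H *m H - c *: H) = 0)
  {w0 : 'rV_m} {mu : F} :
  w0 != 0 -> w0 *m X = 0 -> w0 *m H = mu *: w0 -> mu != 0 -> False.
Proof.
move=> w00 w0X w0H mu0.
have Pres : forall v : 'rV_m, v *m row_mx X H = 0 -> v *m M *m row_mx X H = 0.
  move=> v; rewrite !mul_mx_row => /eqP; rewrite row_mx_eq0 => /andP [/eqP h1 /eqP h2].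
  by rewrite (PX _ h1) (PH1 _ h2) row_mx0.
have wMX := PX _ w0X.
set u := w0 *m M *m H.
have hHX : H *m X = X *m H + 2%:R *: X by rewrite -rHX addrC subrK.
have uX : u *m X = 0.
  by rewrite /u -mulmxA hHX mulmxDr mulmxA wMX mul0mx -scalemxAr wMX scaler0 addr0.
have uH : u *m H = - mu *: u.
  have hp : w0 *m (H *m H + (- mu) *: H) = 0.
    by rewrite mulmxDr mulmxA w0H -scalemxAl w0H -scalemxAr w0H !scalerA mulNr scaleNr subrr.
  have := PH2 _ _ hp; rewrite scaleNr opprK mulmxDr mulmxA -scalemxAr -/u => /eqP.
  by rewrite addr_eq0 => /eqP ->; rewrite scaleNr.
have u0 : u = 0.
  apply/eqP; apply/negP => /negP u0.
  have [k1 hk1] := lowest hF rHY rXY u0 uX uH.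
  have [k2 hk2] := lowest hF rHY rXY w00 w0X w0H.
  have e : (k1 + k2)%:R = 0%:R :> F.
    have e1 : k1%:R = mu :> F by apply: oppr_inj; rewrite -hk1.
    by rewrite natrD e1 hk2 addNr.
  have := @natr_inj0 _ hF _ _ e => /eqP; rewrite addn_eq0 => /andP [_ /eqP hk].
  by move: mu0; rewrite hk2 hk oppr0 eqxx.
have := KL Minj Pres w0.
rewrite !mul_mx_row wMX -/u u0 row_mx0 => /(_ erefl) /eqP.
rewrite row_mx_eq0 w0H => /andP [_]; rewrite scaler_eq0 (negbTE mu0) (negbTE w00).
by [].
Qed.

Lemma nz_eig {F : closedFieldType} {m : nat} {X H : 'M[F]_m}
  (rHX : H *m X - X *m H = 2%:R *: X) (two0 : (2%:R : F) != 0) :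
  X != 0 -> exists v : 'rV_m, exists mu : F, [/\ v != 0, v *m H = mu *: v & mu != 0].
Proof.
move=> X0.
have hXH : (H - 2%:R%:M) *m X = X *m H.
  by rewrite mulmxBl mul_scalar_mx -rHX opprB addrC subrK.
have sXH : (X *m H <= X)%MS by rewrite -hXH submxMl.
have [w [nu [w0 wX wH]]] := eigsub X0 sXH.
case: (eqVneq nu 0) => [nu0|nu0]; last by exists w, nu.
case: (boolP (eigenvalue H 2%:R)).
  by case/eigenvalueP => v vH v0; exists v, 2%:R.
move=> hall; exfalso.
have Minj : forall v : 'rV_m, v *m (H - 2%:R%:M) = 0 -> v = 0.
  move=> v hv; apply/eqP; apply: contraT => v0.
  rewrite -(negbTE hall); apply/eigenvalueP; exists v => //.
  by move: hv; rewrite mulmxBr mul_mx_scalar => /eqP; rewrite subr_eq0 => /eqP.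
have Pres : forall v : 'rV_m, v *m X = 0 -> v *m (H - 2%:R%:M) *m X = 0.
  by move=> v hv; rewrite -mulmxA hXH mulmxA hv mul0mx.
case/submxP: wX => v hv.
have := KL Minj Pres v; rewrite -mulmxA hXH mulmxA -hv wH nu0 scale0r => /(_ erefl).
by move/eqP; rewrite (negbTE w0).
Qed.

Lemma final_abs {F : closedFieldType} (hF : [pchar F] =i pred0) {m : nat} {X Y H M : 'M[F]_m}
  (rHX : H *m X - X *m H = 2%:R *: X)
  (rHY : H *m Y - Y *m H = - (2%:R *: Y)) (rXY : X *m Y - Y *m X = H)
  (Minj : forall v : 'rV_m, v *m M = 0 -> v = 0)
  (PX : forall v : 'rV_m, v *m X = 0 -> v *m M *m X = 0)
  (PY : forall v : 'rV_m, v *m Y = 0 -> v *m M *m Y = 0)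
  (PH1 : forall v : 'rV_m, v *m H = 0 -> v *m M *m H = 0)
  (PH2 : forall (v : 'rV_m) (c : F), v *m (H *m H + c *: H) = 0 -> v *m M *m (H *m H - c *: H) = 0)
  (X0 : X != 0) : False.
Proof.
have two0 : (2%:R : F) != 0.
  by apply/negP => /eqP h; have := @natr_inj0 _ hF 2 0 h.
have [v [mu [v0 vH mu0]]] := nz_eig rHX two0 X0.
have hZX : X *m H = H *m X + (- 2%:R) *: X by rewrite scaleNr -rHX opprB addrC subrK.
have hZY : Y *m H = H *m Y + 2%:R *: Y by rewrite (rel_swap rHY) opprK.
have m20 : - (2%:R : F) != 0 by rewrite oppr_eq0.
have [j [hj1 hj2]] := chain_end hF m20 hZX vH v0.
have ejX := chain_eig hZX vH j.
have hj2' : v *m X ^+ j *m X = 0 by rewrite -mulmxA -expSm.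
case: (eqVneq (mu + j%:R * - 2%:R) 0) => e1; last first.
  exact: (main_abs hF rHX rHY rXY Minj PX PH1 PH2 hj1 hj2' ejX e1).
have [j' [hk1 hk2]] := chain_end hF two0 hZY vH v0.
have ejY := chain_eig hZY vH j'.
have hk2' : v *m Y ^+ j' *m Y = 0 by rewrite -mulmxA -expSm.
case: (eqVneq (mu + j'%:R * 2%:R) 0) => e2.
  have e3 : (j + j')%:R * 2%:R = 0 :> F.
    have ea : j%:R * 2%:R = mu :> F.
      by apply/eqP; rewrite -subr_eq0 -oppr_eq0 opprB -mulrN e1.
    have eb : j'%:R * 2%:R = - mu :> F.
      by apply/eqP; rewrite -subr_eq0 opprK addrC e2.
    by rewrite natrD mulrDl ea eb subrr.
  move/eqP: e3; rewrite mulf_eq0 (negbTE two0) orbF => /eqP e3.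
  have := @natr_inj0 _ hF _ 0 e3 => /eqP; rewrite addn_eq0 => /andP [/eqP hj _].
  by move: e1 mu0; rewrite hj mul0r addr0 => ->; rewrite eqxx.
have rHX' : (- H) *m Y - Y *m (- H) = 2%:R *: Y.
  by rewrite mulNmx mulmxN opprK addrC -opprB rHY opprK.
have rHY' : (- H) *m X - X *m (- H) = - (2%:R *: X).
  by rewrite mulNmx mulmxN opprK addrC -opprB rHX.
have rXY' : Y *m X - X *m Y = - H by rewrite -rXY opprB.
have PH1' : forall v : 'rV_m, v *m (- H) = 0 -> v *m M *m (- H) = 0.
  by move=> w; rewrite !mulmxN => /eqP; rewrite oppr_eq0 => /eqP /PH1 ->; rewrite oppr0.
have PH2' : forall (v : 'rV_m) (c : F), v *m ((- H) *m (- H) + c *: (- H)) = 0 ->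
    v *m M *m ((- H) *m (- H) - c *: (- H)) = 0.
  move=> w c; rewrite mulNmx mulmxN opprK scalerN -scaleNr => /PH2.
  by [].
have ejY' : v *m Y ^+ j' *m (- H) = (- (mu + j'%:R * 2%:R)) *: (v *m Y ^+ j').
  by rewrite mulmxN ejY scaleNr.
by apply: (main_abs hF rHX' rHY' rXY' Minj PY PH1' PH2' hk1 hk2' ejY'); rewrite oppr_eq0.
Qed.

Lemma tr_delta {F : fieldType} {n : nat} (i j : 'I_n) :
  \tr (delta_mx i j : 'M[F]_n) = (i == j)%:R.
Proof.
rewrite /mxtrace (bigD1 i) //= big1 ?addr0; first by rewrite mxE eqxx.
by move=> k /negbTE ki; rewrite mxE ki.
Qed.

Lemma dmulE {F : fieldType} {n : nat} (i j k l : 'I_n) (A : 'M[F]_n) :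
  (delta_mx i j *m A) k l = (k == i)%:R * A j l.
Proof.
rewrite mxE (bigD1 j) //= big1 ?addr0; first by rewrite mxE eqxx andbT.
by move=> r /negbTE rj; rewrite mxE rj andbF mul0r.
Qed.

Lemma muldE {F : fieldType} {n : nat} (i j k l : 'I_n) (A : 'M[F]_n) :
  (A *m delta_mx i j) k l = A k i * (l == j)%:R.
Proof.
rewrite mxE (bigD1 i) //= big1 ?addr0; first by rewrite mxE eqxx.
by move=> r /negbTE ri; rewrite mxE ri mulr0.
Qed.

Lemma center0 {F : fieldType} (hF : [pchar F] =i pred0) {n : nat} (hn : (2 <= n)%N)
  (A : 'M[F]_n) : \tr A = 0 ->
  (forall i j : 'I_n, i != j -> delta_mx i j *m A = A *m delta_mx i j) -> A = 0.
Proof.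
move=> trA hc.
have off : forall k i : 'I_n, k != i -> A k i = 0.
  move=> k i ki; have ik : i != k by rewrite eq_sym.
  have := congr1 (fun M : 'M[F]_n => M k k) (hc i k ik).
  by rewrite dmulE muldE (negbTE ki) mul0r eqxx mulr1 => <-.
have dg : forall i j : 'I_n, i != j -> A j j = A i i.
  move=> i j ij; have := congr1 (fun M : 'M[F]_n => M i j) (hc i j ij).
  by rewrite dmulE muldE !eqxx mul1r mulr1.
have n0 : (0 < n)%N by apply: leq_trans hn.
set o := Ordinal n0.
have dg' : forall k : 'I_n, A k k = A o o.
  by move=> k; case: (eqVneq o k) => [->|ok] //; apply: dg.
have Ao : A o o = 0.
  move: trA; rewrite /mxtrace (eq_bigr (fun=> A o o)) // sumr_const card_ord.
  move/eqP; rewrite -mulr_natl mulf_eq0 => /orP [|/eqP] //.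
  by rewrite ((pcharf0P F).1 hF) => /eqP n00; exfalso; move: hn; rewrite n00.
apply/matrixP => k l; rewrite mxE.
case: (eqVneq k l) => [<-|kl]; first by rewrite dg'.
exact: off.
Qed.

Lemma sl0 {F : fieldType} {n : nat} : sl (0 : 'M[F]_n). Proof. by rewrite /sl mxtrace0. Qed.
Lemma slD {F : fieldType} {n : nat} (g h : 'M[F]_n) : sl g -> sl h -> sl (g + h).
Proof. by rewrite /sl mxtraceD => -> ->; rewrite addr0. Qed.
Lemma slZ {F : fieldType} {n : nat} (a : F) (g : 'M[F]_n) : sl g -> sl (a *: g).
Proof. by rewrite /sl mxtraceZ => ->; rewrite mulr0. Qed.
Lemma slN {F : fieldType} {n : nat} (g : 'M[F]_n) : sl g -> sl (- g).
Proof. by move=> h; rewrite -scaleN1r; apply: slZ. Qed.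
Lemma slB {F : fieldType} {n : nat} (g h : 'M[F]_n) : sl g -> sl h -> sl (g - h).
Proof. by move=> ? ?; apply: slD => //; apply: slN. Qed.

Lemma rho0 {F : fieldType} {n m : nat} {rho : 'M[F]_n -> 'M[F]_m} (hmod : right_sl_module rho) :
  rho 0 = 0.
Proof.
have := hmod.1 1 0 0 sl0 sl0; rewrite !scale1r addr0 => /(congr1 (fun x => x - rho 0)).
by rewrite subrr addrK => ->.
Qed.
Lemma rhoZ {F : fieldType} {n m : nat} {rho : 'M[F]_n -> 'M[F]_m} (hmod : right_sl_module rho)
  (a : F) g : sl g -> rho (a *: g) = a *: rho g.
Proof. by move=> hg; have := hmod.1 a g 0 hg sl0; rewrite !addr0 (rho0 hmod) addr0. Qed.
Lemma rhoD {F : fieldType} {n m : nat} {rho : 'M[F]_n -> 'M[F]_m} (hmod : right_sl_module rho)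
  g h : sl g -> sl h -> rho (g + h) = rho g + rho h.
Proof. by move=> hg hh; have := hmod.1 1 g h hg hh; rewrite !scale1r. Qed.
Lemma rhoN {F : fieldType} {n m : nat} {rho : 'M[F]_n -> 'M[F]_m} (hmod : right_sl_module rho)
  g : sl g -> rho (- g) = - rho g.
Proof. by move=> hg; rewrite -scaleN1r (rhoZ hmod) // scaleN1r. Qed.
Lemma rhoB {F : fieldType} {n m : nat} {rho : 'M[F]_n -> 'M[F]_m} (hmod : right_sl_module rho)
  g h : sl g -> sl h -> rho (g - h) = rho g - rho h.
Proof. by move=> hg hh; rewrite (rhoD hmod) ?(rhoN hmod) //; apply: slN. Qed.

Lemma aut0 {F : fieldType} {n m : nat} {rho : 'M[F]_n -> 'M[F]_m} {P : 'M[F]_n * 'rV[F]_m -> 'M[F]_n * 'rV[F]_m} :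
  L_automorphism rho P -> P (0, 0) = (0, 0).
Proof.
case=> [[_ lin] _ _ _].
have h0 : inL ((0, 0) : 'M[F]_n * 'rV[F]_m) by exact: sl0.
have := lin 1 _ _ h0 h0; rewrite /L_add /L_scale /= !scale1r !addr0.
case: (P (0,0)) => a b [e1 e2].
have -> : a = 0 by have := congr1 (fun x => x - a) e1; rewrite subrr addrK => ->.
by have -> : b = 0 by have := congr1 (fun x => x - b) e2; rewrite subrr addrK => ->.
Qed.

Lemma autI {F : fieldType} (hF : [pchar F] =i pred0) {n m : nat} (hn : (2 <= n)%N)
  {rho : 'M[F]_n -> 'M[F]_m} (hmod : right_sl_module rho)
  {P : 'M[F]_n * 'rV[F]_m -> 'M[F]_n * 'rV[F]_m} (hP : L_automorphism rho P) (u : 'rV[F]_m) :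
  (P (0, u)).1 = 0.
Proof.
have P0 := aut0 hP.
case: hP => [[inLP lin] inj surj brk].
have hu : inL ((0, u) : 'M[F]_n * 'rV[F]_m) by exact: sl0.
apply: (center0 hF hn); first exact: (inLP _ hu).
move=> i j ij.
have hd : inL ((delta_mx i j, 0) : 'M[F]_n * 'rV[F]_m).
  by rewrite /inL /sl /= tr_delta (negbTE ij).
have [z hz hPz] := surj _ hd.
have := brk z (0, u) hz hu.
rewrite {1}/lbracket /= mulmx0 mul0mx subrr (rho0 hmod) mulmx0 P0 hPz.
move/(congr1 fst); rewrite /lbracket /= => /eqP; rewrite eq_sym subr_eq0 => /eqP.
done.
Qed.

Lemma core {F : fieldType} {n m : nat}
  {rho : 'M[F]_n -> 'M[F]_m} (hmod : right_sl_module rho)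
  {P : 'M[F]_n * 'rV[F]_m -> 'M[F]_n * 'rV[F]_m} (hP : L_automorphism rho P)
  (g : 'M[F]_n) (hg : sl g) (v w : 'rV[F]_m) :
  P (g, v) = (- g, w) ->
  (v *m rho g = 0 -> w *m rho g = 0) /\
  (forall c : F, v *m (rho g *m rho g + c *: rho g) = 0 ->
      w *m (rho g *m rho g - c *: rho g) = 0).
Proof.
move=> hPx.
have P0 := aut0 hP.
case: hP => [[inLP lin] inj surj brk].
have rN : rho (- g) = - rho g by exact: rhoN.
have hx : inL (g, v) by exact: hg.
have h1 : P (0, v *m rho g) = (0, - (w *m rho g)).
  have := brk _ _ hx hx; rewrite /lbracket /= subrr hPx /= subrr rN mulmxN //.
have hy : inL ((0, v *m rho g) : 'M[F]_n * 'rV[F]_m) by exact: sl0.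
have h2 : P (0, v *m rho g *m rho g) = (0, w *m rho g *m rho g).
  have := brk _ _ hy hx; rewrite /lbracket /= mulmx0 mul0mx subrr h1 hPx /=.
  by rewrite mulmx0 mul0mx subrr rN mulNmx mulmxN opprK.
have hy2 : inL ((0, v *m rho g *m rho g) : 'M[F]_n * 'rV[F]_m) by exact: sl0.
split.
  move=> e; move: h1; rewrite e P0 => [[]] /eqP; rewrite eq_sym oppr_eq0 => /eqP //.
move=> c e.
have := lin c _ _ hy hy2; rewrite h1 h2 /L_add /L_scale /= scaler0 addr0.
have -> : c *: (v *m rho g) + v *m rho g *m rho g = v *m (rho g *m rho g + c *: rho g).
  by rewrite mulmxDr mulmxA scalemxAr addrC.
rewrite e P0 => [[]] /esym.
by move=> <-; rewrite mulmxBr mulmxA -scalemxAr scalerN addrC.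
Qed.

Lemma mx_of_lin {F : fieldType} {m : nat} (f : 'rV[F]_m -> 'rV[F]_m)
  (hf : forall (a : F) u v, f (a *: u + v) = a *: f u + f v) :
  exists M : 'M[F]_m, forall v, v *m M = f v.
Proof.
have f0 : f 0 = 0.
  have := hf 1 0 0; rewrite !scale1r addr0 => /(congr1 (fun x => x - f 0)).
  by rewrite subrr addrK => /esym.
have fZ : forall a u, f (a *: u) = a *: f u.
  by move=> a u; have := hf a u 0; rewrite !addr0 f0 addr0.
have fD : forall u v, f (u + v) = f u + f v.
  by move=> u v; have := hf 1 u v; rewrite !scale1r.
have fsum : forall (s : seq 'I_m) (G : 'I_m -> 'rV_m),
    f (\sum_(j <- s) G j) = \sum_(j <- s) f (G j).
  move=> s G; elim: s => [|j s IH]; first by rewrite !big_nil f0.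
  by rewrite !big_cons fD IH.
exists (\matrix_(i, j) f (delta_mx 0 i) 0 j) => v.
rewrite {2}(row_sum_delta v) fsum {1}(row_sum_delta v) mulmx_suml.
apply: eq_bigr => j _; rewrite -scalemxAl fZ; congr (_ *: _).
by rewrite -rowE; apply/rowP => k; rewrite !mxE.
Qed.

Lemma rho_sum {F : fieldType} {n m : nat} {rho : 'M[F]_n -> 'M[F]_m} (hmod : right_sl_module rho)
  {I : Type} (s : seq I) (G : I -> 'M[F]_n) : (forall i, sl (G i)) ->
  rho (\sum_(i <- s) G i) = \sum_(i <- s) rho (G i) /\ sl (\sum_(i <- s) G i).
Proof.
move=> hG; elim: s => [|a s [IH1 IH2]]; first by rewrite !big_nil (rho0 hmod); split => //; exact: sl0.
rewrite !big_cons (rhoD hmod) ?IH1 //; split => //; exact: slD.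
Qed.

Lemma delta_comm {F : fieldType} {n : nat} {i j : 'I_n} : i != j ->
  (delta_mx i j : 'M[F]_n) *m delta_mx j i - delta_mx j i *m delta_mx i j
  = delta_mx i i - delta_mx j j.
Proof. by move=> ij; rewrite !mul_delta_mx. Qed.

Lemma sl_delta {F : fieldType} {n : nat} {i j : 'I_n} : i != j -> sl (delta_mx i j : 'M[F]_n).
Proof. by move=> ij; rewrite /sl tr_delta (negbTE ij). Qed.

Lemma sl_hdelta {F : fieldType} {n : nat} (i j : 'I_n) : sl (delta_mx i i - delta_mx j j : 'M[F]_n).
Proof. by rewrite /sl raddfB /= !tr_delta !eqxx subrr. Qed.

Lemma exists_nz {F : fieldType} {n m : nat} (hn : (2 <= n)%N)
  {rho : 'M[F]_n -> 'M[F]_m} (hmod : right_sl_module rho) (hnt : nontrivial_action rho) :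
  exists i j : 'I_n, i != j /\ rho (delta_mx i j) != 0.
Proof.
case: (boolP [exists i, exists j, (i != j) && (rho (delta_mx i j) != 0)]).
  by case/existsP => i /existsP [j /andP [ij hr]]; exists i, j.
rewrite negb_exists => /forallP hall.
have hall' : forall i j : 'I_n, i != j -> rho (delta_mx i j) = 0.
  move=> i j ij; have := hall i; rewrite negb_exists => /forallP /(_ j).
  by rewrite ij /= negbK => /eqP.
case: hnt => g [hg hrg]; exfalso; apply: hrg.
have n0 : (0 < n)%N by apply: leq_trans hn.
pose o := Ordinal n0.
have hdiag : forall i : 'I_n, rho (delta_mx i i - delta_mx o o) = 0.
  move=> i; case: (eqVneq i o) => [->|io]; first by rewrite subrr (rho0 hmod).
  rewrite -(delta_comm (F:=F) io) (hmod.2 _ _ (sl_delta io)); last by apply: sl_delta; rewrite eq_sym.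
  by rewrite hall' // mul0mx mulmx0 subrr.
pose Fg (i j : 'I_n) : 'M[F]_n :=
  if i == j then g i i *: (delta_mx i i - delta_mx o o) else g i j *: delta_mx i j.
have slF : forall i j, sl (Fg i j).
  move=> i j; rewrite /Fg; case: (eqVneq i j) => [_|ij]; apply: slZ; first exact: sl_hdelta.
  exact: sl_delta.
have rF : forall i j, rho (Fg i j) = 0.
  move=> i j; rewrite /Fg; case: (eqVneq i j) => [_|ij].
    by rewrite (rhoZ hmod) ?hdiag ?scaler0 //; exact: sl_hdelta.
  by rewrite (rhoZ hmod) ?hall' ?scaler0 //; exact: sl_delta.
have eF : forall i j, Fg i j = g i j *: delta_mx i j - (if i == j then g i i *: delta_mx o o else 0).
  move=> i j; rewrite /Fg; case: (eqVneq i j) => [<-|ij]; last by rewrite subr0.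
  by rewrite scalerBr.
have eg : g = \sum_i \sum_j Fg i j.
  have -> : \sum_i \sum_j Fg i j = \sum_i (\sum_j g i j *: delta_mx i j - g i i *: delta_mx o o).
    apply: eq_bigr => i _; rewrite (eq_bigr _ (fun j _ => eF i j)) sumrB; congr (_ - _).
    rewrite -big_mkcond /= (big_pred1 i) // => j; by rewrite /= eq_sym.
  rewrite sumrB -(matrix_sum_delta g) -scaler_suml.
  by move: hg; rewrite /sl /mxtrace => ->; rewrite scale0r subr0.
have := (rho_sum hmod (index_enum 'I_n) (fun i => \sum_j Fg i j)).
case.
  by move=> i; exact: (rho_sum hmod (index_enum 'I_n) (Fg i) (slF i)).2.
rewrite -eg => -> _; rewrite big1 // => i _.
by rewrite (rho_sum hmod (index_enum 'I_n) (Fg i) (slF i)).1 big1.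
Qed.

Lemma triple_rel {F : fieldType} {n m : nat} {rho : 'M[F]_n -> 'M[F]_m} (hmod : right_sl_module rho)
  {i j : 'I_n} (ij : i != j) :
  let X := rho (delta_mx i j) in let Y := rho (delta_mx j i) in
  let H := rho (delta_mx i i - delta_mx j j) in
  [/\ H *m X - X *m H = 2%:R *: X, H *m Y - Y *m H = - (2%:R *: Y) & X *m Y - Y *m X = H].
Proof.
have ji : j != i by rewrite eq_sym.
have se := sl_delta (F:=F) ij; have sf := sl_delta (F:=F) ji.
have sh := sl_hdelta (F:=F) i j.
split.
- rewrite -(hmod.2 _ _ sh se) -(rhoZ hmod) //; congr rho.
  rewrite mulmxBl mulmxBr !mul_delta_mx_cond !eqxx ?(negbTE ij) ?(negbTE ji) /=.
  by rewrite mulr0n mulr1n subr0 sub0r opprK scaler_nat mulr2n.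
- rewrite -(hmod.2 _ _ sh sf) -(rhoZ hmod) // -(rhoN hmod); last exact: slZ.
  congr rho.
  rewrite mulmxBl mulmxBr !mul_delta_mx_cond !eqxx ?(negbTE ij) ?(negbTE ji) /=.
  by rewrite mulr0n mulr1n subr0 sub0r scaler_nat mulr2n opprD.
- by rewrite -(hmod.2 _ _ se sf) delta_comm.
Qed.

Theorem lemma3p5 (F : closedFieldType) (hF : [pchar F] =i pred0)
    (n m : nat) (hn : (2 <= n)%N) (rho : 'M[F]_n -> 'M[F]_m)
    (hmod : right_sl_module rho) (hirr : irreducible_module rho)
    (hnt : nontrivial_action rho)
    (D : 'M[F]_n * 'rV[F]_m -> 'M[F]_n * 'rV[F]_m)
    (hD : L_linear D)
    (hDsl : forall g : 'M[F]_n, sl g -> (D (g, 0)).1 = - g) :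
  ~ local_automorphism rho D.
Proof.
case=> _ hloc.
have hf : forall (a : F) (u v : 'rV[F]_m),
    (D (0, a *: u + v)).2 = a *: (D (0, u)).2 + (D (0, v)).2.
  move=> a u v; have := hD.2 a (0, u) (0, v) sl0 sl0.
  by rewrite /L_add /L_scale /= scaler0 addr0 => ->.
have [M hM] := mx_of_lin (fun v => (D (0, v)).2) hf.
have D1 : forall v : 'rV[F]_m, (D (0, v)).1 = 0.
  move=> v; have [P [hP hPx]] := hloc (0, v) sl0.
  by rewrite -hPx (autI hF hn hmod hP).
have Dgv : forall g (v : 'rV[F]_m), sl g -> D (g, v) = (- g, (D (g, 0)).2 + v *m M).
  move=> g v hg; have := hD.2 1 (g, 0) (0, v) hg sl0.
  rewrite /L_add /L_scale /= !scale1r addr0 add0r => ->.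
  by rewrite hDsl // D1 addr0 hM.
have PG : forall g, sl g ->
    (forall v : 'rV[F]_m, v *m rho g = 0 -> v *m M *m rho g = 0) /\
    (forall (v : 'rV[F]_m) (c : F), v *m (rho g *m rho g + c *: rho g) = 0 ->
       v *m M *m (rho g *m rho g - c *: rho g) = 0).
  move=> g hg.
  have [P0 [hP0 hP0x]] := hloc (g, 0) hg.
  have [c01 c02] := core hmod hP0 g hg 0 _ (etrans hP0x (Dgv g 0 hg)).
  split.
    move=> v hv; have [P [hP hPx]] := hloc (g, v) hg.
    have [c1 _] := core hmod hP g hg v _ (etrans hPx (Dgv g v hg)).
    have d1 : (D (g, 0)).2 *m rho g = 0 by have := c01 (mul0mx _ _); rewrite mul0mx addr0.
    by have := c1 hv; rewrite mulmxDl d1 add0r.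
  move=> v c hv; have [P [hP hPx]] := hloc (g, v) hg.
  have [_ c2] := core hmod hP g hg v _ (etrans hPx (Dgv g v hg)).
  have d2 : (D (g, 0)).2 *m (rho g *m rho g - c *: rho g) = 0.
    by have := c02 c (mul0mx _ _); rewrite mul0mx addr0.
  by have := c2 c hv; rewrite mulmxDl d2 add0r.
have Minj : forall v : 'rV[F]_m, v *m M = 0 -> v = 0.
  move=> v hv; have [P [hP hPx]] := hloc (0, v) sl0.
  have e : P (0, v) = P (0, 0).
    have hM2 : (D (0, v)).2 = v *m M by rewrite hM.
    by rewrite (aut0 hP) hPx [D (0, v)]surjective_pairing D1 hM2 hv.
  case: hP => _ inj _ _; have := inj (0, v) (0, 0) sl0 sl0 e.
  by case.
have [i [j [ij Xnz]]] := exists_nz hn hmod hnt.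
have ji : j != i by rewrite eq_sym.
have [rHX rHY rXY] := triple_rel hmod ij.
have [PX _] := PG _ (sl_delta (F:=F) ij).
have [PY _] := PG _ (sl_delta (F:=F) ji).
have [PH1 PH2] := PG _ (sl_hdelta (F:=F) i j).
exact: (final_abs hF rHX rHY rXY Minj PX PY PH1 PH2 Xnz).
Qed.
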